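(* Let $\nu,\mu$ be strict partitions with $\mu\subseteq\nu$ and let $T$ be a semistandard shifted tableau of skew shape $\nu/\mu$. At any stage of the mixed rectification of $T$, if an entry $x$ has not yet moved, then every entry located southeast of $x$ is at least as large as $x$.
   Context: A strict partition $\theta=(\theta_1>\dots>\theta_k>0)$ is identified with its shifted Young diagram: row $i$ consists of the cells $(i,j)$ with $i\le j\le i+\theta_i-1$ (English convention, row 1 on top). For strict partitions $\mu\subseteq\nu$, the skew shape $\nu/\mu$ is the set of cells of $\nu$ not in $\mu$. A cell $(i,i)$ is diagonal. For a cell $\mathsf b=(i,j)$ write $\mathsf b^{\uparrow}=(i-1,j)$, $\mathsf b^{\leftarrow}=(i,j-1)$, $\mathsf b^{\downarrow}=(i+1,j)$, $\mathsf b^{\uparrow\leftarrow}=(i-1,j-1)$. Alphabet: for each positive integer $i$ there is a low letter $\underline{i}$ and a high letter $\overline{\imath}$, ordered $\underline1<\overline1<\underline2<\overline2<\cdots$. Raising means replacing $\underline i$ by $\overline\imath$; lowering the reverse. A semistandard (shifted) tableau of shape $\nu/\mu$ is a filling of the cells of $\nu/\mu$ with such letters so that rows weakly increase left to right, columns weakly increase top to bottom, no diagonal cell contains a low letter, each column contains at most one copy of each high letter, and each row contains at most one copy of each low letter. A tableau with holes additionally allows a symbol $\bullet$ (neither high nor low, allowed anywhere and repeatedly). Mixed rectification of $T$: place a $\bullet$ in every cell of the bottom row of $\mu$. Bullets are swapped with entries by mixed slides, and a bullet is deleted as soon as there is no entry of the tableau to its southeast. An entry $y$ in cell $\mathsf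 b$ is available if $\mathsf b^\uparrow$ or $\mathsf b^\leftarrow$ contains a $\bullet$. Available entries are ordered by the letter order, ties broken so that among equal low letters the northmost is least and among equal high letters the westmost is least. Let $y\in\mathsf b$ be the least available entry and apply the unique applicable slide from the first of the collections (R1)–(R6) in which some slide applies (a cell vacated by an entry receives a $\bullet$): (R1) if $\mathsf b^\uparrow,\mathsf b^\leftarrow,\mathsf b^{\uparrow\leftarrow}$ all contain $\bullet$, move $y$ to $\mathsf b^{\uparrow\leftarrow}$; or if $\mathsf b$ is diagonal and $\mathsf b^\uparrow,\mathsf b^{\uparrow\leftarrow}$ contain $\bullet$, move $y$ to $\mathsf b^{\uparrow\leftarrow}$. (R2) if $\mathsf b^{\uparrow\leftarrow}$ contains an entry $x$ and $\mathsf b^\uparrow,\mathsf b^\leftarrow$ contain $\bullet$: if $y$ is low and $x\ne y$, move $y$ to $\mathsf b^\uparrow$; if $y$ is high and $x\neq y$, move $y$ to $\mathsf b^\leftarrow$. (R3) if $\mathsf b^\leftarrow$ is diagonal, $\mathsf b^{\uparrow\leftarrow}$ and the cell left of it contain entries, $\mathsf b^\uparrow,\mathsf b^\leftarrow$ contain $\bullet$ and $y$ is low, raise $y$ and move it to $\mathsf b^\leftarrow$; or if $\mathsf b^{\uparrow\leftarrow}$ contains an entry, $\mathsf b^\uparrow,\mathsf b^\leftarrow$ contain $\bullet$ and $y$ is low, move $y$ to $\mathsf b^\leftarrow$; or in the same situation with $y$ high, move $y$ to $\mathsf b^\uparrow$. (R4) if $y=\underline k$, $\mathsf b^\leftarrow$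 is diagonal and contains $\bullet$, and the diagonal cell $\mathsf b^\downarrow$ contains $\overline k$: put $\overline k$ in $\mathsf b^\leftarrow$ and in $\mathsf b$, and $\bullet$ in $\mathsf b^\downarrow$. (R5) if $\mathsf b^\leftarrow$ is diagonal and contains $\bullet$ and $\mathsf b^\downarrow$ is a cell, raise $y$ and move it to $\mathsf b^\leftarrow$; or if $\mathsf b$ is diagonal, $y$ is high, $\mathsf b^\uparrow$ contains $\bullet$ and $\mathsf b^{\uparrow\leftarrow}$ contains an entry, lower $y$ and move it to $\mathsf b^\uparrow$. (R6) if $\mathsf b^\leftarrow$ contains $\bullet$, move $y$ to $\mathsf b^\leftarrow$; if $\mathsf b^\uparrow$ contains $\bullet$, move $y$ to $\mathsf b^\uparrow$. Repeat with the new least available entry until no entry is available; the result has some shape $\nu'/\mu'$. Then place bullets in the bottom row of $\mu'$ and repeat, until a tableau of straight shape is obtained. *)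

(* Defs.v *)
From mathcomp Require Import all_boot.
Set Implicit Arguments. Unset Strict Implicit. Unset Printing Implicit Defensive.

(* Letter k false = low letter  \underline{k};  Letter k true = high letter \overline{k}. *)
Record letter := Letter { lidx : nat; lhigh : bool }.

(* order 1 < 1' < 2 < 2' < ... : rank = 2k + [high] *)
Definition rank (l : letter) : nat := (lidx l).*2 + lhigh l.
Definition leL (x y : letter) : bool := rank x <= rank y.
Definition raise (l : letter) : letter := Letter (lidx l) true.
Definition lower (l : letter) : letter := Letter (lidx l) false.

(* ---------- cells and shapes (1-indexed, English, shifted) ---------- *)
Definition cell := (nat * nat)%type.

Definition in_shape (l : seq nat) (c : cell) : bool :=
  [&& 0 < c.1, c.1 <= size l, c.1 <= c.2 & c.2 < c.1 + nth 0 l c.1.-1].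

Definition strict_partition (l : seq nat) : bool :=
  sorted (fun a b => b < a) l && all (fun a => 0 < a) l.

Definition skew (nu mu : seq nat) (c : cell) : bool :=
  in_shape nu c && ~~ in_shape mu c.

Definition diagonal (c : cell) : bool := c.1 == c.2.

Definition up (c : cell) : cell := (c.1.-1, c.2).
Definition left (c : cell) : cell := (c.1, c.2.-1).
Definition down (c : cell) : cell := (c.1.+1, c.2).

Definition se (c c' : cell) : Prop := c.1 <= c'.1 /\ c.2 <= c'.2.

(* semistandard shifted tableau of shape nu/mu (T only matters on nu/mu) *)
Definition semistandard (nu mu : seq nat) (T : cell -> letter) : Prop :=
  (forall c, skew nu mu c -> 0 < lidx (T c)) /\
  (forall i j j', skew nu mu (i, j) -> skew nu mu (i, j') -> j < j' ->
     leL (T (i, j)) (T (i, j'))) /\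
  (forall i i' j, skew nu mu (i, j) -> skew nu mu (i', j) -> i < i' ->
     leL (T (i, j)) (T (i', j))) /\
  (forall c, skew nu mu c -> diagonal c -> lhigh (T c)) /\
  (forall i i' j, skew nu mu (i, j) -> skew nu mu (i', j) -> i <> i' ->
     T (i, j) = T (i', j) -> ~~ lhigh (T (i, j))) /\
  (forall i j j', skew nu mu (i, j) -> skew nu mu (i, j') -> j <> j' ->
     T (i, j) = T (i, j') -> lhigh (T (i, j))).

(* Outside: not a cell of the current tableau; Inner: cell of the current inner
   shape mu'; Hole: a bullet; Ent x: an entry. *)
Inductive content := Outside | Inner | Hole | Ent of letter.

Definition state := cell -> content.

Definition init (nu mu : seq nat) (T : cell -> letter) : state :=
  fun c => if skew nu mu c then Ent (T c)
           else if in_shape mu c then Inner else Outside.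

Definition upd (f : state) (c : cell) (v : content) : state :=
  fun c' => if c' == c then v else f c'.

Definition move (f : state) (b : cell) (v : content) (t : cell) : state :=
  upd (upd f b Hole) t v.

Definition isEnt (f : state) (c : cell) : Prop := exists x, f c = Ent x.

Definition clean (f g : state) : Prop :=
  forall c,
    ((f c = Hole /\ (forall c', se c c' -> ~ isEnt f c')) -> g c = Outside) /\
    (~ (f c = Hole /\ (forall c', se c c' -> ~ isEnt f c')) -> g c = f c).

Definition available (f : state) (b : cell) : Prop :=
  isEnt f b /\ (f (up b) = Hole \/ f (left b) = Hole).

Definition precedes (f : state) (b b' : cell) : Prop :=
  exists y y', f b = Ent y /\ f b' = Ent y' /\
    (rank y < rank y' \/
     (y = y' /\ (if lhigh y then b.2 < b'.2 else b.1 < b'.1))).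

Definition least_available (f : state) (b : cell) : Prop :=
  available f b /\ forall b', available f b' -> b' <> b -> precedes f b b'.

(* ---------- the slide rules (y is the entry in b) ---------- *)
Section Rules.
Variables (f : state) (b : cell) (y : letter) (g : state).
Let u := up b.
Let l := left b.
Let ul := up (left b).
Let ll := left (up (left b)).
Let d := down b.

Definition R1 : Prop :=
  ((f u = Hole /\ f l = Hole /\ f ul = Hole) \/
   (diagonal b /\ f u = Hole /\ f ul = Hole)) /\
  g = move f b (Ent y) ul.

Definition R2 : Prop :=
  exists x, f ul = Ent x /\ f u = Hole /\ f l = Hole /\ x <> y /\
    g = (if lhigh y then move f b (Ent y) l else move f b (Ent y) u).

Definition R3a_cond : Prop :=
  diagonal l /\ isEnt f ul /\ isEnt f ll /\ f u = Hole /\ f l = Hole /\ ~~ lhigh y.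
Definition R3_pre : Prop := isEnt f ul /\ f u = Hole /\ f l = Hole.

Definition R3 : Prop :=
  (R3a_cond /\ g = move f b (Ent (raise y)) l) \/
  (~ R3a_cond /\ R3_pre /\ ~~ lhigh y /\ g = move f b (Ent y) l) \/
  (R3_pre /\ lhigh y /\ g = move f b (Ent y) u).

Definition R4 : Prop :=
  ~~ lhigh y /\ diagonal l /\ f l = Hole /\ diagonal d /\
  f d = Ent (Letter (lidx y) true) /\
  g = upd (upd (upd f l (Ent (Letter (lidx y) true))) b
             (Ent (Letter (lidx y) true))) d Hole.

Definition R5a_cond : Prop :=
  diagonal l /\ f l = Hole /\ (f d = Hole \/ isEnt f d).
Definition R5b_cond : Prop :=
  diagonal b /\ lhigh y /\ f u = Hole /\ isEnt f ul.

Definition R5 : Prop :=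
  (R5a_cond /\ g = move f b (Ent (raise y)) l) \/
  (~ R5a_cond /\ R5b_cond /\ g = move f b (Ent (lower y)) u).

Definition R6 : Prop :=
  (f l = Hole /\ g = move f b (Ent y) l) \/
  (f l <> Hole /\ f u = Hole /\ g = move f b (Ent y) u).
End Rules.

Definition applies (R : state -> cell -> letter -> state -> Prop)
  (f : state) (b : cell) (y : letter) : Prop := exists g, R f b y g.

Definition slide (f : state) (b : cell) (y : letter) (g : state) : Prop :=
  R1 f b y g \/
  (~ applies R1 f b y /\ R2 f b y g) \/
  (~ applies R1 f b y /\ ~ applies R2 f b y /\ R3 f b y g) \/
  (~ applies R1 f b y /\ ~ applies R2 f b y /\ ~ applies R3 f b y /\ R4 f b y g) \/
  (~ applies R1 f b y /\ ~ applies R2 f b y /\ ~ applies R3 f b y /\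
   ~ applies R4 f b y /\ R5 f b y g) \/
  (~ applies R1 f b y /\ ~ applies R2 f b y /\ ~ applies R3 f b y /\
   ~ applies R4 f b y /\ ~ applies R5 f b y /\ R6 f b y g).

Definition place_row (r : nat) (f : state) : state :=
  fun c => match f c with
           | Inner => if c.1 == r then Hole else Inner
           | v => v
           end.

Definition mstep (f g : state) : Prop :=
  (exists b y h, least_available f b /\ f b = Ent y /\ slide f b y h /\ clean h g)
  \/
  ((forall b, ~ available f b) /\
   exists r h, (exists j, f (r, j) = Inner) /\
     (forall i j, f (i, j) = Inner -> i <= r) /\
     h = place_row r f /\ clean h g).

(* Main.v *)
Require Import Defs.
From mathcomp Require Import all_boot zify.
Set Implicit Arguments. Unset Strict Implicit.

Definition JK (c : cell) (x : letter) (p : cell) (w : letter) : Prop :=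
  rank x <= rank w /\ (rank x = rank w -> lhigh x -> p.1 = c.1) /\
  (rank x = rank w -> ~~ lhigh x -> p.2 = c.2) /\
  (~~ lhigh x -> c.2 < p.1 -> rank x + 2 <= rank w).

Definition Inv (f : state) (c : cell) (x : letter) : Prop :=
  forall p w, se c p -> f p = Ent w -> JK c x p w.

Lemma rank_inj x y : rank x = rank y -> x = y.
Proof.
case: x => a h; case: y => a' h'; rewrite /rank /= -!muln2.
case: h; case: h' => /= H; first [f_equal; lia | exfalso; lia].
Qed.

Lemma move_ent f b v t p w :
  move f b v t p = Ent w -> (p = t /\ v = Ent w) \/ (p <> t /\ p <> b /\ f p = Ent w).
Proof.
rewrite /move /upd; case: eqP => [-> -> | Hpt]; first by left.
by case: eqP => // Hpb Hf; right.
Qed.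

Lemma clean_ent h g p w : clean h g -> g p = Ent w -> h p = Ent w.
Proof.
move=> /(_ p) [H1 H2] Hg.
have Hn : ~ (h p = Hole /\ (forall c', se p c' -> ~ isEnt h c')).
  by move=> /H1; rewrite Hg.
by rewrite -(H2 Hn).
Qed.

Lemma place_ent r f p w : place_row r f p = Ent w -> f p = Ent w.
Proof. by rewrite /place_row; case: (f p) => //; case: ifP. Qed.

Ltac fin := repeat split => //; try (by left); try (by right; left); try (by right; right); try apply: leq_pred; try tauto.

Lemma slide_cases f b y h : f b = Ent y -> slide f b y h ->
 (exists t v, h = move f b (Ent v) t /\ f t = Hole /\ t.1 <= b.1 /\ t.2 <= b.2 /\
   (v = y \/ v = raise y \/ (t = up b /\ lhigh y /\ diagonal b /\ v = lower y))) \/ R4 f b y h.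
Proof.
move=> Hb Hs.
have HR : R1 f b y h \/ R2 f b y h \/ R3 f b y h \/ R4 f b y h \/ R5 f b y h \/ R6 f b y h.
  case: Hs => [R|[[_ R]|[[_ [_ R]]|[[_ [_ [_ R]]]|[[_ [_ [_ [_ R]]]]|[_ [_ [_ [_ [_ R]]]]]]]]]]; tauto.
have l1 : forall n, n.-1 <= n := leq_pred.
case: HR => [[Hc ->]|[[z [_ [Hu [Hl [_ ->]]]]]|[R|[R|[R|R]]]]].
- left; exists (up (left b)), y; rewrite /=; fin.
- left; case: (lhigh y).
  + by exists (left b), y; rewrite /=; fin.
  + by exists (up b), y; rewrite /=; fin.
- left; case: R => [[[_ [_ [_ [_ [Hl _]]]]] ->]|[[_ [[_ [_ Hl]] [_ ->]]]|[[_ [Hu _]] [_ ->]]]].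
  + by exists (left b), (raise y); rewrite /=; fin.
  + by exists (left b), y; rewrite /=; fin.
  + by exists (up b), y; rewrite /=; fin.
- by right.
- left; case: R => [[[_ [Hl _]] ->]|[_ [[Hd [Hh [Hu _]]] ->]]].
  + by exists (left b), (raise y); rewrite /=; fin.
  + by exists (up b), (lower y); rewrite /=; fin.
- left; case: R => [[Hl ->]|[_ [Hu ->]]].
  + by exists (left b), y; rewrite /=; fin.
  + by exists (up b), y; rewrite /=; fin.
Qed.

Ltac bsimp := repeat match goal with
| H : ?A -> is_true true -> ?B |- _ => let H' := fresh in pose proof (fun a => H a isT) as H'; clear H
| H : ?A -> is_true false -> ?B |- _ => clear H
| H : is_true true -> ?B |- _ => specialize (H isT)
| H : is_true false -> ?B |- _ => clear H
end.

Ltac letsolve x y := case: x => ? []; case: y => ? []; rewrite /JK /rank /= -?muln2 => -[? [? [? ?]]]; bsimp; repeat split; intros; try done; lia.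

Lemma move_JK f b y t v c x : f b = Ent y -> f t = Hole -> t.1 <= b.1 -> t.2 <= b.2 ->
  (v = y \/ v = raise y \/ (t = up b /\ lhigh y /\ diagonal b /\ v = lower y)) ->
  c <> b -> Inv f c x -> se c t -> JK c x t v.
Proof.
move=> Hb Ht H1 H2 Hv Hcb Hinv [S1 S2].
have tb : t <> b by move=> E; rewrite E Hb in Ht.
have : JK c x b y by apply: (Hinv b y) => //; split; lia.
clear Hinv Hb Ht Hcb.
case: Hv => [->|[->|[Etu [Hy [Hd ->]]]]].
- rewrite /JK => -[J1 [J2 [J3 J4]]]; repeat split => //.
  + by move=> E Hx; move: (J2 E Hx); lia.
  + by move=> E Hx; move: (J3 E Hx); lia.
  + by move=> Hx Hlt; apply: J4 => //; lia.
- letsolve x y.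
- have b1 : b.1 <> 0.
    move=> E; apply: tb; rewrite Etu /up; move: E; by case: (b) => ?? /= ->.
  have tb1 : t.1 = b.1.-1 by rewrite Etu.
  have tb2 : t.2 = b.2 by rewrite Etu.
  have bd : b.1 = b.2 by apply/eqP.
  move: Hy; clear Etu tb Hd; case: x => ? []; case: y => ? [] //= _;
  rewrite /JK /rank /= -?muln2 => -[? [? [? ?]]]; bsimp; repeat split; intros; try done; lia.
Qed.

Lemma R4_JK f b y h c x : f b = Ent y -> R4 f b y h -> f c = Ent x -> h c = Ent x ->
  Inv f c x -> Inv h c x.
Proof.
move=> Hb [Hy [_ [Hl [_ [Hd ->]]]]] Hfc Hhc Hinv p w Hse.
have cb : c <> b.
  move=> E; move: Hhc Hfc; rewrite E /upd eqxx Hb.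
  case: eqP => [Ed|_]; first by move: Ed; case: (b) => ?? [] /=; lia.
  move=> [<-] [] E2; move: Hy; by rewrite E2.
rewrite /upd; case: eqP => [_ //|Hpd]; case: eqP => [Epb [<-]|Hpb].
- have : JK c x (down b) (Letter (lidx y) true).
    apply: (Hinv _ _) => //; move: Hse; rewrite Epb /se /down /=; lia.
  move: Hse; rewrite Epb /se /down /=; case: (b) => b1 b2 /= [S1 S2].
  case: x {Hinv Hfc Hhc} => ? []; rewrite /JK /rank /= -?muln2 => -[? [? [? ?]]]; bsimp;
    repeat split; intros; try done; lia.
- case: eqP => [Epl [<-]|_]; last by apply: Hinv.
  rewrite Epl; apply: (@move_JK f b y (left b) (raise y) c x) => //.
  all: try by right; left.
  all: try exact: leq_pred.
  by rewrite -Epl.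
Qed.

Lemma step_ok f g c x : mstep f g -> f c = Ent x -> g c = Ent x -> Inv f c x -> Inv g c x.
Proof.
move=> [[b [y [h [_ [Hb [Hs Hc]]]]]] | [_ [r [h [_ [_ [-> Hc]]]]]]] Hfc Hgc Hinv p w Hse Hgp.
- have Hhp := clean_ent Hc Hgp; have Hhc := clean_ent Hc Hgc.
  case: (slide_cases Hb Hs) => [[t [v [Eh [Ht [H1 [H2 Hv]]]]]] | R].
  + rewrite Eh in Hhp Hhc.
    have cb : c <> b.
      case/move_ent: Hhc => [[Ect _]|[_ [//]]]; by rewrite -Ect Hfc in Ht.
    case/move_ent: Hhp => [[Ept [<-]] | [_ [_ Hfp]]]; last exact: Hinv.
    rewrite Ept in Hse *; exact: (move_JK Hb Ht H1 H2 Hv cb Hinv Hse).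
  + exact: (R4_JK Hb R Hfc Hhc Hinv Hse Hhp).
- apply: Hinv Hse _; apply: place_ent; exact: clean_ent Hc Hgp.
Qed.

Lemma strict_nth l i j : strict_partition l -> i <= j -> j < size l ->
  nth 0 l j + (j - i) <= nth 0 l i.
Proof.
move=> /andP [Hs _]; elim: j => [|j IH] Hij Hj.
  by move: Hij; rewrite leqn0 => /eqP ->; rewrite subnn addn0.
case: (ltngtP i j.+1) => [Hi|Hi|->]; [|lia|by rewrite subnn addn0].
have := IH (ltnSE Hi) (ltnW Hj).
have := (sortedP 0 Hs) j Hj; lia.
Qed.

Lemma strict_pos l i : strict_partition l -> i < size l -> 0 < nth 0 l i.
Proof. by move=> /andP [_ /(all_nthP 0) H] /H. Qed.

Lemma rank_low x : ~~ lhigh x -> rank x = (lidx x) * 2.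
Proof. by case: x => ? [] //= _; rewrite /rank /= muln2 addn0. Qed.
Lemma rank_high x : lhigh x -> rank x = (lidx x) * 2 + 1.
Proof. by case: x => ? [] //= _; rewrite /rank /= muln2. Qed.

Lemma init_J nu mu T c p : strict_partition nu -> semistandard nu mu T ->
  skew nu mu c -> skew nu mu p -> se c p ->
  rank (T c) <= rank (T p) /\ (T c = T p -> lhigh (T c) -> p.1 = c.1) /\
  (T c = T p -> ~~ lhigh (T c) -> p.2 = c.2).
Proof.
case: c => a b; case: p => a' b' Hsp [_ [Hrow [Hcol [_ [Hcolh Hrowl]]]]] Hc Hp [/= S1 S2].
have Hq : skew nu mu (a, b').
  move: Hc Hp; rewrite /skew /in_shape /= => /andP[/and4P[c1 c2 c3 c4] cm] /andP[/and4P[p1 p2 p3 p4] _].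
  apply/andP; split.
    apply/and4P; split => //; first lia.
    have := @strict_nth nu a.-1 a'.-1 Hsp; lia.
  apply: contra cm => /and4P [m1 m2 m3 m4]; apply/and4P; split => //; lia.
have r1 : rank (T (a,b)) <= rank (T (a,b')).
  case: (ltngtP b b') => [H|H|->]; [exact: Hrow Hc Hq H|lia|by []].
have r2 : rank (T (a,b')) <= rank (T (a',b')).
  case: (ltngtP a a') => [H|H|->]; [exact: Hcol Hq Hp H|lia|by []].
split; first lia.
split=> /= E.
- case: (ltngtP a a') => [H|H|->] Hh; [|lia|by []].
  have Eq : T (a,b') = T (a',b') by apply: rank_inj; rewrite E in r1; lia.
  have := Hcolh a a' b' Hq Hp ltac:(lia) Eq; by rewrite Eq -E Hh.
- case: (ltngtP b b') => [H|H|->] Hh; [|lia|by []].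
  have Eq : T (a,b) = T (a,b') by apply: rank_inj; rewrite -E in r2; lia.
  have := Hrowl a b b' Hc Hq ltac:(lia) Eq; by rewrite (negbTE Hh).
Qed.

Lemma init_K nu mu T c p : strict_partition nu -> strict_partition mu -> semistandard nu mu T ->
  skew nu mu c -> skew nu mu p -> se c p ->
  ~~ lhigh (T c) -> c.2 < p.1 -> rank (T c) + 2 <= rank (T p).
Proof.
case: c => a b; case: p => a' b' Hsp Hsm HT Hc Hp [/= S1 S2] Hlow /= Hba.
have HT' := HT; case: HT' => [_ [_ [Hcol [Hdiag _]]]].
have He : skew nu mu (b, b).
  move: Hc Hp; rewrite /skew /in_shape /= => /andP[/and4P[c1 c2 c3 c4] cm] /andP[/and4P[p1 p2 p3 p4] _].
  apply/andP; split.
    apply/and4P; split => //; try lia.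
    have := @strict_pos nu b.-1 Hsp; lia.
  apply: contra cm => /and4P [m1 m2 m3 m4]; apply/and4P; split => //; try lia.
  have := @strict_nth mu a.-1 b.-1 Hsm; lia.
have ab : a < b.
  case: (ltngtP a b) => [//|H|E].
    by move: Hc; rewrite /skew /in_shape /= => /andP[/and4P[_ _ ? _] _]; lia.
  by move: Hlow; rewrite (Hdiag _ Hc) // /diagonal /= E.
have r1 := Hcol a b b Hc He ab.
have Hh : lhigh (T (b,b)) by apply: (Hdiag _ He); rewrite /diagonal /= eqxx.
have Hse2 : se (b,b) (a',b') by rewrite /se /=; lia.
have [r2 [r3 _]] := init_J Hsp HT He Hp Hse2.
have ne : rank (T (b,b)) <> rank (T (a',b')).
  move=> /rank_inj E; have := r3 E Hh; rewrite /=; lia.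
move: r1 r2 ne; rewrite /leL (rank_low Hlow) (rank_high Hh); lia.
Qed.

Lemma init_ent nu mu T q w : init nu mu T q = Ent w -> skew nu mu q /\ T q = w.
Proof. by rewrite /init; case: ifP => [_ [<-]|_] //; case: ifP. Qed.

Theorem lemma3p5 (nu mu : seq nat) (T : cell -> letter) :
  strict_partition nu -> strict_partition mu ->
  (forall c, in_shape mu c -> in_shape nu c) ->
  semistandard nu mu T ->
  forall (n : nat) (sigma : nat -> state),
    sigma 0 = init nu mu T ->
    (forall k, k < n -> mstep (sigma k) (sigma k.+1)) ->
    forall (c : cell) (x : letter),
      (forall k, k <= n -> sigma k c = Ent x) ->
      forall (c' : cell) (y : letter),
        se c c' -> sigma n c' = Ent y -> leL x y.
Proof.
move=> Hsn Hsm _ HT n sigma H0 Hstep c x Hun c' y Hse Hn.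
suff H : forall k, k <= n -> Inv (sigma k) c x.
  by case: (H n (leqnn n) c' y Hse Hn).
elim => [_|k IH Hk].
- have := Hun 0 isT; rewrite H0 => /init_ent [Hc Ex] p w Hp.
  move=> /init_ent [Hpk Ew]; rewrite -Ex -Ew.
  have [J1 [J2 J3]] := init_J Hsn HT Hc Hpk Hp.
  split => //; split; first by move=> /rank_inj; exact: J2.
  split; first by move=> /rank_inj; exact: J3.
  exact: init_K Hsn Hsm HT Hc Hpk Hp.
- exact: step_ok (Hstep k Hk) (Hun k (ltnW Hk)) (Hun k.+1 Hk) (IH (ltnW Hk)).
Qed.
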